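(* Let $\hat Q_i:\mathcal X\times\mathcal A\to[0,1]$ ($i\in[m]$) be arbitrary and let $\hat\pi=\prod_i\hat\pi_i$ be a product policy that, for every context $x$, is an exact regularized Nash equilibrium of the empirical game $\{\hat Q_i(x,\cdot)\}_i$ (i.e. for all $i$, $\hat\pi_i(\cdot|x)$ maximizes $\pi_i'\mapsto\mathbb E_{a_i\sim\pi_i',\boldsymbol a_{-i}\sim\hat\pi_{-i}(\cdot|x)}[\hat Q_i(x,\boldsymbol a)]-\eta^{-1}\mathrm{KL}(\pi_i'\|\pi_i^{\mathrm{ref}}(\cdot|x))$ over $\Delta(\mathcal A_i)$). Let $\mathcal Z_i=\hat Q_i-r_i^\star$. Then for every $i\in[m]$ and every $x$, $$V_i^{\dagger,\hat\pi_{-i}}(x)-V_i^{\hat\pi}(x)\le\frac\eta2\max_{a_i\in\mathcal A_i}\mathbb E_{\boldsymbol a_{-i}\sim\hat\pi_{-i}(\cdot|x)}\big[\mathcal Z_i(x,a_i,\boldsymbol a_{-i})^2\big].$$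
   Context: $m$-player game: contexts $x\in\mathcal X$, finite action sets $\mathcal A_i$, $\mathcal A=\prod_i\mathcal A_i$, rewards $r_i^\star:\mathcal X\times\mathcal A\to[0,1]$, reference policies $\pi_i^{\mathrm{ref}}$, $\eta>0$. $V_i^\pi(x)=\mathbb E_{\boldsymbol a\sim\pi(\cdot|x)}[r_i^\star(x,\boldsymbol a)]-\eta^{-1}\mathrm{KL}(\pi_i(\cdot|x)\|\pi_i^{\mathrm{ref}}(\cdot|x))$ and $V_i^{\dagger,\nu_{-i}}(x)=\max_{\pi_i'}V_i^{(\pi_i',\nu_{-i})}(x)$, where $(\pi_i',\nu_{-i})$ is the joint policy $\pi_i'(a_i|x)\nu_{-i}(\boldsymbol a_{-i}|x)$; $\hat\pi_{-i}=\prod_{j\ne i}\hat\pi_j$. *)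

(* Defs.v *)
From HB Require Import structures.
From mathcomp Require Import all_boot all_order all_algebra.
From mathcomp Require Import all_classical all_reals all_analysis.
Set Implicit Arguments. Unset Strict Implicit. Unset Printing Implicit Defensive.
Import Order.TTheory GRing.Theory Num.Theory.
Local Open Scope ring_scope.

Section Defs.
Variables (R : realType) (m : nat) (A : 'I_m -> finType).

Definition profile := {dffun forall i : 'I_m, A i}.

Definition is_dist (T : finType) (p : T -> R) : Prop :=
  (forall t, 0 <= p t) /\ \sum_t p t = 1.

Definition prodprob (pol : forall j : 'I_m, A j -> R) (a : profile) : R :=
  \prod_j pol j (a j).

Definition expect (pol : forall j : 'I_m, A j -> R) (f : profile -> R) : R :=
  \sum_(a : profile) prodprob pol a * f a.

(* KL(p || q), with 0 ln 0 = 0 and value +oo when p is not absolutely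
   continuous w.r.t. q *)
Definition KL (T : finType) (p q : T -> R) : \bar R :=
  if [forall t, (q t == 0) ==> (p t == 0)]
  then (\sum_(t | p t != 0) p t * ln (p t / q t))%:E
  else +oo%E.

Definition reg_value (eta : R) (Q : profile -> R)
    (pol : forall j : 'I_m, A j -> R) (i : 'I_m) (ref : A i -> R) : \bar R :=
  ((expect pol Q)%:E - (eta^-1)%:E * KL (pol i) ref)%E.
Arguments reg_value : clear implicits.

Definition br_value (eta : R) (Q : profile -> R)
    (pol : forall j : 'I_m, A j -> R) (i : 'I_m) (ref : A i -> R) : \bar R :=
  ereal_sup [set reg_value eta Q (mathcomp_extra.dfwith pol i p') i ref
            | p' in [set p' : A i -> R | is_dist p']].

End Defs.
Arguments reg_value {R m A} eta Q pol i ref.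
Arguments br_value : clear implicits.
Arguments br_value {R m A} eta Q pol i ref.

Arguments profile {m} A.

(* Main.v *)
Require Import Defs.
From HB Require Import structures.
From mathcomp Require Import all_boot all_order all_algebra.
From mathcomp Require Import all_classical all_reals all_analysis.
From mathcomp Require Import ring lra.
Import Order.TTheory GRing.Theory Num.Theory.
Local Open Scope ring_scope.
Section S.
Variable R : realType.
Lemma dlin (c x : R) : is_derive x 1 (fun u : R => u * c) c.
Proof.
have := @is_deriveZ R R R id c x 1 1 (is_derive_id x 1).
have -> : (c \*: id) = (fun u : R => u * c).
  by apply/funext => u /=; rewrite mulrC.
by rewrite /GRing.scale /= mulr1.
Qed.
Lemma dexp (c x : R) : is_derive x 1 (fun u : R => expR (u * c)) (expR (x * c) * c).
Proof.
exact: (@is_derive1_comp R expR (fun u => u * c) x (expR (x*c)) c (is_derive_expR _) (dlin c x)).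
Qed.
Lemma dsum (T : finType) (h : T -> R -> R) (dh : T -> R) (x : R) :
  (forall t, is_derive x 1 (h t) (dh t)) ->
  is_derive x 1 (fun u => \sum_t h t u) (\sum_t dh t).
Proof.
move=> H.
have -> : (fun u => \sum_t h t u) = \sum_t h t.
  by apply/funext => u; rewrite fct_sumE.
by elim/big_ind2 : _ => // [|] *; [exact: is_derive_cst|exact: is_deriveD].
Qed.
Lemma dmulc (f : R -> R) (k df x : R) : is_derive x 1 f df ->
  is_derive x 1 (fun u => k * f u) (k * df).
Proof. move=> H; exact: (@is_deriveZ R R R f k x 1 df H). Qed.
Lemma MVT_le0 (f df : R -> R) (a b : R) : a <= b ->
  (forall x : R, is_derive x 1 f (df x)) -> (forall x, a < x < b -> df x <= 0) ->
  f b <= f a.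
Proof.
move=> ab fd dle.
case: (ltgtP a b) ab => // [altb|->] _; last by [].
rewrite -subr_le0.
have [|c cab ->] := MVT altb (fun x _ => fd x).
  apply: derivable_within_continuous => r _; by case: (fd r).
apply: mulr_le0_ge0; last by rewrite subr_ge0 ltW.
by apply: dle; move: cab; rewrite in_itv.
Qed.
Lemma dB' (f g : R -> R) df dg (x : R) : is_derive x 1 f df -> is_derive x 1 g dg ->
  is_derive x 1 (fun u => f u - g u) (df - dg).
Proof. move=> H1 H2; exact: (is_deriveB H1 H2). Qed.
Lemma dN' (f : R -> R) df (x : R) : is_derive x 1 f df ->
  is_derive x 1 (fun u => - f u) (- df).
Proof. move=> H1; exact: (is_deriveN H1). Qed.
Lemma dmulr (f : R -> R) (k df x : R) : is_derive x 1 f df ->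
  is_derive x 1 (fun u => f u * k) (df * k).
Proof.
move=> H; have := @dmulc f k df x H.
have -> : (fun u => k * f u) = (fun u => f u * k) by apply/funext => u; rewrite mulrC.
by rewrite mulrC.
Qed.
Lemma dM' (f g : R -> R) df dg (x : R) : is_derive x 1 f df -> is_derive x 1 g dg ->
  is_derive x 1 (fun u => f u * g u) (f x * dg + g x * df).
Proof. move=> H1 H2; exact: (is_deriveM H1 H2). Qed.
Lemma dV' (f : R -> R) df (x : R) : f x != 0 -> is_derive x 1 f df ->
  is_derive x 1 (fun u => (f u)^-1) (- (f x) ^- 2 * df).
Proof. move=> H1 H2; exact: (is_deriveV H1 H2). Qed.
Lemma dcomp (f g : R -> R) (x a b : R) :
  is_derive (g x) 1 f a -> is_derive x 1 g b ->
  is_derive x 1 (fun u => f (g u)) (a * b).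
Proof. move=> H1 H2; exact: (is_derive1_comp H1 H2). Qed.

Section Tilt.
Variables (T : finType) (w y : T -> R) (s : R).
Hypotheses (w0 : forall t, 0 <= w t) (w1 : \sum_t w t = 1)
  (ys : forall t, y t ^+ 2 <= s).
Let D u := \sum_t w t * expR (u * y t).
Let N u := \sum_t (w t * y t) * expR (u * y t).
Let P u := \sum_t (w t * y t * y t) * expR (u * y t).
Let mu := \sum_t w t * y t.

Lemma dD (u : R) : is_derive u 1 D (N u).
Proof.
apply: is_derive_eq; first by apply: dsum => t; apply: dmulc; apply: dexp.
apply: eq_bigr => t _. rewrite /GRing.scale/= mulr0 add0r mulr1; ring.
Qed.
Lemma dN (u : R) : is_derive u 1 N (P u).
Proof.
apply: is_derive_eq; first by apply: dsum => t; apply: dmulc; apply: dexp.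
apply: eq_bigr => t _. rewrite /GRing.scale/= mulr0 add0r mulr1; ring.
Qed.
Lemma Dpos (u : R) : 0 < D u.
Proof.
have [t0 wt0] : exists t0, 0 < w t0.
  apply/not_existsP => H; move: w1; rewrite big1 => [|t _].
    by move/eqP; rewrite eq_sym oner_eq0.
  by apply/eqP; rewrite eq_le w0 andbT leNgt; apply/negP => /(H t).
rewrite /D (bigD1 t0) //=.
have : 0 <= \sum_(i | i != t0) w i * expR (u * y i).
  by apply: sumr_ge0 => i _; rewrite mulr_ge0 ?expR_ge0.
have : 0 < w t0 * expR (u * y t0) by rewrite mulr_gt0 ?expR_gt0.
lra.
Qed.
Lemma PsD (u : R) : P u <= s * D u.
Proof.
rewrite /P /D mulr_sumr; apply: ler_sum => t _.
have := ys t; have := w0 t; have := expR_ge0 (u * y t).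
set e := expR _; move=> e0 wt yt.
have : 0 <= (s - y t ^+ 2) * (w t * e) by rewrite mulr_ge0 ?subr_ge0 ?mulr_ge0.
rewrite expr2; nra.
Qed.
Lemma D0 : D 0 = 1.
Proof. by rewrite /D -w1; apply: eq_bigr => t _; rewrite mul0r expR0 mulr1. Qed.
Lemma N0 : N 0 = mu.
Proof. by apply: eq_bigr => t _; rewrite mul0r expR0 mulr1. Qed.

Lemma step1 u0 : 0 <= u0 -> N u0 <= (mu + u0 * s) * D u0.
Proof.
move=> u00.
pose f u := N u * (D u)^-1 - u * s.
pose df u := N u * (- (D u) ^- 2 * N u) + (D u)^-1 * P u - s.
have fd (u : R) : is_derive u 1 f (df u).
  apply: dB'; first apply: dM'; [exact: dN| apply: dV'; [by rewrite gt_eqF ?Dpos| exact: dD]|].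
  exact: dlin.
have : f u0 <= f 0.
  apply: (@MVT_le0 f df 0 u0 u00 fd) => u _.
  rewrite /df.
  have Dp := Dpos u.
  have h1 : (D u)^-1 * P u <= s.
    by rewrite ler_pdivrMl // mulrC; apply: PsD.
  have h2 : 0 <= N u * ((D u) ^- 2 * N u).
    by rewrite mulrCA -expr2 mulr_ge0 ?sqr_ge0 // invr_ge0 exprn_ge0 // ltW.
  rewrite mulNr mulrN; lra.
rewrite /f D0 N0 invr1 mulr1 mul0r subr0 lerBlDr => H.
by rewrite -ler_pdivrMr ?Dpos // addrC.
Qed.

Lemma tilt : ln (D 1) <= mu + s / 2.
Proof.
pose g u := - (u * mu) - u * u * (s / 2).
pose dg u := - mu - (u * (s/2) + u * (s / 2)).
have gd (u : R) : is_derive u 1 g (dg u).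
  apply: dB'.
    by apply: dN'; exact: dlin.
  have h := @dmulr (fun u => u * u) (s/2) _ u (@dM' (fun u => u) (fun u => u) 1 1 u (is_derive_id u 1) (is_derive_id u 1)).
  apply: (is_derive_eq h); ring.
pose H u := D u * expR (g u).
pose dH u := D u * (expR (g u) * dg u) + expR (g u) * N u.
have Hd (u : R) : is_derive u 1 H (dH u).
  move: u; move=> u.
  exact: (dM' _ _ _ _ _ (dD u) (@dcomp expR g u (expR (g u)) (dg u) (is_derive_expR _) (gd u))).
have : H 1 <= H 0.
  apply: (@MVT_le0 H dH 0 1 ler01 Hd) => u /andP[u0 u1].
  have := @step1 u (ltW u0); have := expR_gt0 (g u); rewrite /dH /dg.
  set e := expR _; set Du := D u; set Nu := N u => e0 h.
  have : 0 <= e * ((mu + u * s) * Du - Nu) by apply: mulr_ge0; [exact: ltW| rewrite subr_ge0].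
  nra.
have g0 : g 0 = 0 by rewrite /g; ring.
have g1 : g 1 = - mu - s / 2 by rewrite /g; ring.
rewrite /H D0 g0 g1 expR0 mulr1 => HH.
have Dp := Dpos 1.
have : D 1 <= expR (mu + s / 2).
  have := expRD (- mu - s / 2) (mu + s / 2).
  have -> : - mu - s / 2 + (mu + s / 2) = 0 by ring.
  rewrite expR0 => E.
  have := expR_gt0 (mu + s / 2).
  move: HH E; set a := expR (- mu - s / 2); set b := expR (mu + s / 2).
  nra.
move=> HD.
rewrite -(expRK (mu + s / 2)) ler_ln ?posrE ?expR_gt0 //.
Qed.
End Tilt.
End S.
Section G.
Variables (R : realType) (T : finType) (ref : T -> R) (eta : R).
Hypotheses (eta0 : 0 < eta) (ref0 : forall t, 0 <= ref t) (ref1 : \sum_t ref t = 1).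
Variable f : T -> R.
Let G t := ref t * expR (eta * f t).
Let Z := \sum_t G t.
Lemma Zpos : 0 < Z.
Proof.
have [t0 rt0] : exists t0, 0 < ref t0.
  apply/not_existsP => H; move: ref1; rewrite big1 => [|t _].
    by move/eqP; rewrite eq_sym oner_eq0.
  by apply/eqP; rewrite eq_le ref0 andbT leNgt; apply/negP => /(H t).
rewrite /Z (bigD1 t0) //=.
have : 0 <= \sum_(i | i != t0) G i.
  by apply: sumr_ge0 => i _; rewrite mulr_ge0 ?expR_ge0.
have : 0 < G t0 by rewrite mulr_gt0 ?expR_gt0.
lra.
Qed.
Lemma lnx_le (x : R) : 0 < x -> ln x <= x - 1.
Proof. move=> x0; have := expR_ge1Dx (ln x); rewrite lnK ?posrE //; lra. Qed.
Lemma lnx_eq (x : R) : 0 < x -> ln x = x - 1 -> x = 1.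
Proof.
move=> x0 E; case: (eqVneq (ln x) 0) => [l0|ln0].
  by rewrite -(lnK x0) l0 expR0.
have := expR_gt1Dx ln0; rewrite lnK ?posrE //; lra.
Qed.

Section P.
Variable p : T -> R.
Hypotheses (p0 : forall t, 0 <= p t) (p1 : \sum_t p t = 1)
  (supp : forall t, ref t = 0 -> p t = 0).
Let x t := G t / (Z * p t).
Let S := \sum_(t | p t != 0) p t * ln (x t).
Let KLr := \sum_(t | p t != 0) p t * ln (p t / ref t).
Lemma pos_of t : p t != 0 -> 0 < p t /\ 0 < ref t.
Proof.
move=> pt; split; first by rewrite lt0r pt p0.
rewrite lt0r ref0 andbT; apply/eqP => /supp/eqP; exact/negP.
Qed.
Lemma identA : eta * \sum_t p t * f t - KLr - ln Z = S.
Proof.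
have -> : \sum_t p t * f t = \sum_(t | p t != 0) p t * f t.
  rewrite [RHS]big_mkcond /=; apply: eq_bigr => t _.
  by case: eqP => // ->; rewrite mul0r.
have P1 : \sum_(t | p t != 0) p t = 1.
  rewrite -[RHS]p1 big_mkcond /=; apply: eq_bigr => t _.
  by case: eqP => // ->.
rewrite -[ln Z]mul1r -P1 mulr_sumr mulr_suml /KLr /S -sumrB -sumrB.

apply: eq_bigr => t pt; have [pt0 rt0] := pos_of t pt.
have Zp := Zpos.
rewrite /x /G !lnM ?lnV ?expRK ?posrE ?mulr_gt0 ?invr_gt0 ?expR_gt0 //.
rewrite lnM ?posrE //; first ring. by rewrite mulr_gt0.
Qed.
Lemma S_le : S <= \sum_(t | p t != 0) (G t / Z - p t).
Proof.
apply: ler_sum => t pt; have [pt0 rt0] := pos_of t pt.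
have Zp := Zpos.
have xp : 0 < x t by rewrite /x divr_gt0 ?mulr_gt0 ?expR_gt0.
have := @lnx_le (x t) xp; have -> : G t / Z - p t = p t * (x t - 1).
  by rewrite /x; field; rewrite ?gt_eqF.
move=> h; rewrite ler_pM2l //.
Qed.
Lemma sumGZ : \sum_t G t / Z = 1.
Proof. by rewrite -mulr_suml divff // gt_eqF // Zpos. Qed.
Lemma B_le : \sum_(t | p t != 0) (G t / Z - p t) <= 0.
Proof.
have P1 : \sum_(t | p t != 0) p t = 1.
  rewrite -[RHS]p1 big_mkcond /=; apply: eq_bigr => t _.
  by case: eqP => // ->.
rewrite sumrB P1 subr_le0 -sumGZ big_mkcond /=; apply: ler_sum => t _.
case: ifP => // _; rewrite divr_ge0 ?mulr_ge0 ?expR_ge0 // ltW // Zpos.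
all: by [].
Qed.
Lemma S_le0 : S <= 0.
Proof. exact: le_trans S_le B_le. Qed.
Lemma S_eq0 : S = 0 -> forall t, p t = G t / Z.
Proof.
move=> S0.
have P1 : \sum_(t | p t != 0) p t = 1.
  rewrite -[RHS]p1 big_mkcond /=; apply: eq_bigr => t _.
  by case: eqP => // ->.
have Bd := B_le; have Sb := S_le.
have B0 : \sum_(t | p t != 0) (G t / Z - p t) = 0 by apply/eqP; rewrite eq_le Bd /=; rewrite -[X in X <= _]S0.
have Zp := Zpos.
have T0 : \sum_(t | p t != 0) ((G t / Z - p t) - p t * ln (x t)) = 0.
  by rewrite sumrB B0 -/S S0 subr0.
have termeq := psumr_eq0P _ T0.
move=> t; case: (eqVneq (p t) 0) => [pt0|pt].
  have : \sum_(t | p t == 0) G t / Z = 0.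
    move: B0; rewrite sumrB P1 => /eqP; rewrite subr_eq0 => /eqP E.
    move: sumGZ; rewrite (bigID (fun t => p t != 0)) /= E.
    have -> : \sum_(i | ~~ (p i != 0)) G i / Z = \sum_(i | p i == 0) G i / Z.
      by apply: eq_bigl => i; rewrite negbK.
    lra.
  move/psumr_eq0P => H; rewrite pt0 H // ?pt0 //.
  by move=> i _; rewrite divr_ge0 ?mulr_ge0 ?expR_ge0 // ltW.
have [pt0 rt0] := pos_of t pt.
have xp : 0 < x t by rewrite /x divr_gt0 ?mulr_gt0 ?expR_gt0.
have E : ln (x t) = x t - 1.
  have nn i : p i != 0 -> 0 <= G i / Z - p i - p i * ln (x i).
    move=> pi; have [pi0 ri0] := pos_of i pi.
    have xpi : 0 < x i by rewrite /x divr_gt0 ?mulr_gt0 ?expR_gt0.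
    have := @lnx_le (x i) xpi. have -> : G i / Z - p i = p i * (x i - 1).
      by rewrite /x; field; rewrite ?gt_eqF.
    by move=> h; rewrite subr_ge0 ler_pM2l.
  have := termeq nn t pt.
  have -> : G t / Z - p t = p t * (x t - 1).
    by rewrite /x; field; rewrite ?gt_eqF.
  move/eqP; rewrite -mulrBr mulf_eq0 (gt_eqF pt0) /= subr_eq0 => /eqP.
  by move=> ->.
have := @lnx_eq (x t) xp E; rewrite /x => H1.
rewrite (_ : G t / Z = (G t / (Z * p t)) * p t); first by rewrite H1 mul1r.
by field; rewrite !gt_eqF.
Qed.
End P.

Definition Vf (p : T -> R) := ((\sum_t p t * f t)%R%:E - (eta^-1)%:E * KL p ref)%E.

Lemma Vf_inf (p : T -> R) : ~~ [forall t, (ref t == 0) ==> (p t == 0)] -> Vf p = (-oo)%E.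
Proof.
move=> H; rewrite /Vf /KL (negbTE H) gt0_muley ?lte_fin ?invr_gt0 //.
Qed.
Lemma Vf_fin (p : T -> R) : [forall t, (ref t == 0) ==> (p t == 0)] ->
  Vf p = (\sum_t p t * f t - eta^-1 * \sum_(t | p t != 0) p t * ln (p t / ref t))%:E.
Proof. by move=> H; rewrite /Vf /KL H. Qed.

Lemma supp_of (p : T -> R) : [forall t, (ref t == 0) ==> (p t == 0)] -> forall t, ref t = 0 -> p t = 0.
Proof. by move=> /forallP H t rt; move: (H t); rewrite rt eqxx /= => /eqP. Qed.

Lemma aux_le (A K L S : R) : S <= 0 -> eta * A - K - L = S -> A - eta^-1 * K <= eta^-1 * L.
Proof.
move=> Sle SE; rewrite -subr_ge0.
have -> : eta^-1 * L - (A - eta^-1 * K) = - (eta^-1 * (eta * A - K - L)).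
  by field; rewrite gt_eqF.
by rewrite SE oppr_ge0 mulr_ge0_le0 // invr_ge0 ltW.
Qed.
Lemma aux_ge (A K L S : R) : eta * A - K - L = S -> eta^-1 * L <= A - eta^-1 * K -> 0 <= S.
Proof.
move=> SE; rewrite -subr_ge0.
have -> : A - eta^-1 * K - eta^-1 * L = eta^-1 * (eta * A - K - L).
  by field; rewrite gt_eqF.
by rewrite SE pmulr_rge0 // invr_gt0.
Qed.
Lemma aux_eq (A K L : R) : eta * A - K - L = 0 -> A - eta^-1 * K = eta^-1 * L.
Proof.
move=> E; apply/eqP; rewrite -subr_eq0.
have -> : A - eta^-1 * K - eta^-1 * L = eta^-1 * (eta * A - K - L).
  by field; rewrite gt_eqF.
by rewrite E mulr0.
Qed.
Lemma V_le (p : T -> R) : is_dist p -> (Vf p <= (eta^-1 * ln Z)%:E)%E.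
Proof.
move=> [p0 p1].
case: (boolP [forall t, (ref t == 0) ==> (p t == 0)]) => H; last by rewrite Vf_inf // leNye.
rewrite Vf_fin // lee_fin.
have := @identA p p0 p1 (@supp_of p H); have := @S_le0 p p0 p1 (@supp_of p H).
exact: aux_le.
Qed.
Let g t := G t / Z.
Lemma g_ge0 t : 0 <= g t.
Proof. by rewrite /g divr_ge0 ?mulr_ge0 ?expR_ge0 // ltW // Zpos. Qed.
Lemma g_dist : is_dist g.
Proof. by split; [exact: g_ge0| exact: sumGZ]. Qed.
Lemma g_supp : [forall t, (ref t == 0) ==> (g t == 0)].
Proof. by apply/forallP => t; apply/implyP => /eqP rt; rewrite /g /G rt !mul0r. Qed.
Lemma V_g : Vf g = (eta^-1 * ln Z)%:E.
Proof.
rewrite Vf_fin ?g_supp //; congr EFin.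
have := @identA g g_ge0 sumGZ (@supp_of g g_supp).
rewrite [X in _ = X -> _]big1 => [E|t gt].
  exact: (@aux_eq _ _ _ E).
have Zp := Zpos.
have Gt : G t != 0 by move: gt; apply: contra => /eqP; rewrite /g => ->; rewrite mul0r.
rewrite (_ : G t / (Z * g t) = 1) ?ln1 ?mulr0 //.
by rewrite /g; field; rewrite Gt gt_eqF.
Qed.
Lemma V_opt (p : T -> R) : is_dist p -> (Vf g <= Vf p)%E -> forall t, p t = g t.
Proof.
move=> [p0 p1].
case: (boolP [forall t, (ref t == 0) ==> (p t == 0)]) => H; last first.
  by rewrite V_g Vf_inf.
rewrite V_g Vf_fin // lee_fin => Hle.
have SE := @identA p p0 p1 (@supp_of p H).
have S0 := @aux_ge _ _ _ _ SE Hle.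
have Sl := @S_le0 p p0 p1 (@supp_of p H).
apply: (@S_eq0 p p0 p1 (@supp_of p H)).
by apply/eqP; rewrite eq_le Sl S0.
Qed.
End G.
Section Single.
Variables (R : realType) (T : finType) (ref : T -> R) (eta : R).
Hypotheses (eta0 : 0 < eta) (ref0 : forall t, 0 <= ref t) (ref1 : \sum_t ref t = 1).
Variables (q r ph : T -> R) (M : R).
Hypotheses (phd : is_dist ph) (HM : forall t, (q t - r t) ^+ 2 <= M)
  (NE : forall p, is_dist p -> (Vf R T ref eta q p <= Vf R T ref eta q ph)%E).
Let Zq := \sum_t ref t * expR (eta * q t).
Let Zr := \sum_t ref t * expR (eta * r t).
Let gq := fun t => ref t * expR (eta * q t) / Zq.

Lemma aux_final (Lr Lq Aq Ar K : R) : Aq - eta^-1 * K = eta^-1 * Lq ->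
  Lr - Lq <= eta * (Ar - Aq) + eta ^+ 2 * M / 2 ->
  eta^-1 * Lr - (Ar - eta^-1 * K) <= eta / 2 * M.
Proof.
move=> H1 H2.
have i0 : 0 < eta^-1 by rewrite invr_gt0.
have ie : eta^-1 * eta = 1 by rewrite mulVf // gt_eqF.
have := ler_wpM2l (ltW i0) H2.
have -> : eta^-1 * (eta * (Ar - Aq) + eta ^+ 2 * M / 2) = (Ar - Aq) + eta / 2 * M.
  by field; rewrite gt_eqF.
move: H1; nra.
Qed.
Lemma single :
  (ereal_sup [set Vf R T ref eta r p | p in [set p | is_dist p]] - Vf R T ref eta r ph
   <= (eta / 2 * M)%:E)%E.
Proof.
have phE : ph = gq.
  apply/funext => t; apply: (V_opt _ _ _ _ eta0 ref0 ref1 q ph phd).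
  exact: NE (g_dist _ _ _ _ ref0 ref1 q).
rewrite phE.
have Zqp : 0 < Zq := Zpos _ _ _ eta ref0 ref1 q.
have Zrp : 0 < Zr := Zpos _ _ _ eta ref0 ref1 r.
have supq := g_supp _ _ ref eta q.
have Vq := V_g _ _ _ _ eta0 ref0 ref1 q.
rewrite (Vf_fin _ _ _ _ _ _ supq) in Vq.
rewrite (Vf_fin _ _ _ _ _ _ supq).
move: Vq => [Vq].
have sup_le : (ereal_sup [set Vf R T ref eta r p | p in [set p | is_dist p]]
    <= (eta^-1 * ln Zr)%:E)%E.
  by apply: ge_ereal_sup => _ [p pd <-]; exact: (V_le _ _ _ _ eta0 ref0 ref1 r p pd).
apply: le_trans (leeB sup_le (lexx _)) _.
rewrite -EFinB lee_fin.
have := @tilt R T gq (fun t => eta * (r t - q t)) (eta ^+ 2 * M)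
  (fun t => g_ge0 _ _ _ eta ref0 ref1 q t) (g_dist _ _ _ eta ref0 ref1 q).2 _.
rewrite -/Zq -/gq.
move=> /(_ _) H.
have : ln (\sum_t gq t * expR (1 * (eta * (r t - q t)))) <=
   \sum_t gq t * (eta * (r t - q t)) + eta ^+ 2 * M / 2.
  apply: H => t; rewrite exprMn; apply: ler_wpM2l; first by rewrite exprn_ge0 // ltW.
  by rewrite -sqrrN opprB.
have -> : \sum_t gq t * expR (1 * (eta * (r t - q t))) = Zr / Zq.
  rewrite /Zr /gq mulr_suml; apply: eq_bigr => t _.
  rewrite mul1r mulrBr expRD expRN.
  field; rewrite !gt_eqF ?expR_gt0 //.
have -> : \sum_t gq t * (eta * (r t - q t)) = eta * (\sum_t gq t * r t - \sum_t gq t * q t).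
  rewrite -sumrB mulr_sumr; apply: eq_bigr => t _; ring.
rewrite lnM ?lnV ?posrE ?invr_gt0 // => H2.
apply: aux_final Vq _.
exact: H2.
Qed.
End Single.
Lemma sum_prod (R : realType) (m : nat) (A : 'I_m -> finType) (F : forall j, A j -> R) :
  \sum_(a : profile A) \prod_j F j (a j) = \prod_j \sum_(x : A j) F j x.
Proof.
rewrite (reindex (@dffun_of_fprod _ A)); last exact/onW_bij/dffun_of_fprod_bij.
under eq_bigr do under eq_bigr do rewrite ffunE.
transitivity (\sum_(t : fprod A) \prod_(i in 'I_m) [ffun x => F i x] (t i)).
  by apply: eq_bigr => t _; apply: eq_bigr => i _; rewrite ffunE.
rewrite (@big_fprod R 0 1 *%R +%R _ A (fun j => [ffun x => F j x])).
rewrite -(bigA_distr_big_dep (fun i => tagged_with A i) (fun i j => untag 0 [ffun x => F i x] j)).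
apply: eq_bigr => i _; rewrite -(big_tag (fun j => [ffun x => F j x]) i).
by apply: eq_bigr => x _; rewrite ffunE.
Qed.

Section Multi.
Variables (R : realType) (m : nat) (A : 'I_m -> finType).
Implicit Types (pol : forall j : 'I_m, A j -> R) (f : profile A -> R).

Lemma expect_split pol i f :
  expect pol f = \sum_(ai : A i) pol i ai *
    \sum_(a : profile A | a i == ai) (\prod_(j | j != i) pol j (a j)) * f a.
Proof.
rewrite /expect /prodprob (partition_big (fun a : profile A => a i) predT) //=.
apply: eq_bigr => ai _; rewrite mulr_sumr; apply: eq_bigr => a /eqP ai_eq.
by rewrite (bigD1 i) //= ai_eq mulrA.
Qed.

Lemma expect_dfwith pol i (p' : A i -> R) f :
  expect (dfwith pol i p') f = \sum_(ai : A i) p' ai *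
    \sum_(a : profile A | a i == ai) (\prod_(j | j != i) pol j (a j)) * f a.
Proof.
rewrite (expect_split _ i) dfwithin; apply: eq_bigr => ai _; congr (_ * _).
apply: eq_bigr => a _; congr (_ * _); apply: eq_bigr => j ji.
by rewrite dfwithout // eq_sym.
Qed.

Lemma weights1 pol i (ai : A i) : (forall j, is_dist (pol j)) ->
  \sum_(a : profile A | a i == ai) \prod_(j | j != i) pol j (a j) = 1.
Proof.
move=> pd.
pose d := fun x : A i => if x == ai then 1 else 0 : R.
have := @expect_dfwith pol i d (fun _ => 1%R).
have Ed : forall x (S : R), d x * S = if x == ai then S else 0.
  by move=> x S; rewrite /d; case: ifP; rewrite ?mul1r ?mul0r.
under [X in _ = X -> _]eq_bigr do rewrite Ed.
rewrite -big_mkcond big_pred1_eq.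
under eq_bigr do rewrite mulr1.
move=> <-.
rewrite /expect /prodprob.
under eq_bigr do rewrite mulr1.
rewrite sum_prod big1 // => j _.
case: (dfwithP pol d j) => [|k _]; last exact: (pd k).2.
rewrite (bigD1 ai) //= big1 => [|x xai]; last by rewrite /d (negbTE xai).
by rewrite /d eqxx addr0.
Qed.
End Multi.

Lemma jensen (R : realType) (T : finType) (P : pred T) (W Z : T -> R) :
  (forall t, P t -> 0 <= W t) -> \sum_(t | P t) W t = 1 ->
  (\sum_(t | P t) W t * Z t) ^+ 2 <= \sum_(t | P t) W t * Z t ^+ 2.
Proof.
move=> W0 W1; set z := \sum_(t | P t) W t * Z t.
have : 0 <= \sum_(t | P t) W t * (Z t - z) ^+ 2.
  by apply: sumr_ge0 => t Pt; rewrite mulr_ge0 ?sqr_ge0 ?W0.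
have -> : \sum_(t | P t) W t * (Z t - z) ^+ 2 =
    \sum_(t | P t) (W t * Z t ^+ 2 - (2 * z) * (W t * Z t) + z ^+ 2 * W t).
  by apply: eq_bigr => t _; ring.
rewrite big_split sumrB /= -!mulr_sumr W1 -/z.
lra.
Qed.

Theorem mainTheorem6 (R : realType) (m : nat) (X : Type) (A : 'I_m -> finType)
    (rstar Qhat : 'I_m -> X -> profile A -> R)
    (piref pihat : forall i : 'I_m, X -> A i -> R) (eta : R) :
  0 < eta ->
  (forall i x a, 0 <= rstar i x a <= 1) ->
  (forall i x a, 0 <= Qhat i x a <= 1) ->
  (forall i x, is_dist (piref i x)) ->
  (forall i x, is_dist (pihat i x)) ->
  (* pihat(.|x) is an exact regularized Nash equilibrium of the game Qhat(x,.) *)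
  (forall i x (p' : A i -> R), is_dist p' ->
     (reg_value eta (Qhat i x) (mathcomp_extra.dfwith (fun j => pihat j x) i p') i (piref i x)
      <= reg_value eta (Qhat i x) (fun j => pihat j x) i (piref i x))%E) ->
  forall i x,
    (br_value eta (rstar i x) (fun j => pihat j x) i (piref i x)
     - reg_value eta (rstar i x) (fun j => pihat j x) i (piref i x)
     <= (eta / 2 *
         \big[Num.max/0]_(ai : A i)
           \sum_(a : profile A | a i == ai)
              (\prod_(j | j != i) pihat j x (a j)) *
              (Qhat i x a - rstar i x a) ^+ 2)%:E)%E.
Proof.
move=> eta0 _ _ refd phd NE i x.
pose pol := fun j => pihat j x.
pose W := fun a : profile A => \prod_(j | j != i) pihat j x (a j).
have regE (Q : profile A -> R) (p' : A i -> R) :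
    reg_value eta Q (dfwith pol i p') i (piref i x) =
    Vf R (A i) (piref i x) eta (fun t => \sum_(a : profile A | a i == t) W a * Q a) p'.
  by rewrite /reg_value /Vf expect_dfwith dfwithin.
have regE0 (Q : profile A -> R) :
    reg_value eta Q pol i (piref i x) =
    Vf R (A i) (piref i x) eta (fun t => \sum_(a : profile A | a i == t) W a * Q a) (pihat i x).
  by rewrite /reg_value /Vf (expect_split _ _ _ _ i).
have E : (fun p' => reg_value eta (rstar i x) (dfwith pol i p') i (piref i x)) =
    Vf R (A i) (piref i x) eta (fun t => \sum_(a : profile A | a i == t) W a * rstar i x a).
  by apply/funext => p'; exact: regE.
rewrite /br_value -/pol E regE0.
have [ref0 ref1] := refd i x.
apply: (single _ _ _ _ eta0 ref0 ref1 (fun t => \sum_(a : profile A | a i == t) W a * Qhat i x a) _ _ _ (phd i x)).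
- move=> t.
  have -> : \sum_(a : profile A | a i == t) W a * Qhat i x a -
      \sum_(a : profile A | a i == t) W a * rstar i x a =
      \sum_(a : profile A | a i == t) W a * (Qhat i x a - rstar i x a).
    by rewrite -sumrB; apply: eq_bigr => a _; rewrite mulrBr.
  apply: le_trans; last first.
    exact: (le_bigmax _ (fun ai => \sum_(a : profile A | a i == ai)
              (\prod_(j | j != i) pihat j x (a j)) *
              (Qhat i x a - rstar i x a) ^+ 2) t).
  apply: jensen.
    by move=> a _; apply: prodr_ge0 => j _; exact: (phd j x).1.
  exact: (weights1 _ _ _ pol i t (fun j => phd j x)).
- move=> p pd.
  rewrite -regE -regE0.
  exact: NE.
Qed.
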